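(* Let $\varepsilon>0$, $k>0$ and $0<\lambda\le 1$. Then $$\min\Big\{E_\varepsilon[H]:\ H\in H^1(0,\lambda),\ H\ge 0 \text{ a.e.},\ \int_0^\lambda H\,dy=1\Big\}$$ and $$\min\Big\{U_\varepsilon[h]:\ h\in H^2(0,\lambda),\ h'\ge 0\text{ a.e.},\ h(0)=0,\ h(\lambda)=1\Big\}$$ are attained by the homogeneous inverse deformation $h(y)=y/\lambda$, i.e. by the constant inverse stretch $H\equiv 1/\lambda$. The corresponding minimum values are $E_\varepsilon[1/\lambda]=U_\varepsilon[y/\lambda]=\lambda W^*(1/\lambda)=W(\lambda)$.
   Context: Standing assumptions: $W:(0,\infty)\to[0,\infty)$ is continuously differentiable, convex on $(0,1)$, has a single isolated potential well at $F=1$ with $W(1)=0$ (so $W>0$ for $F\neq1$), has a single inflection point at some $F>1$, and has a horizontal asymptote as $F\to+\infty$ (example: $W(F)=(1-F^{-1})^2$). The inverse stored energy is $W^*(H):=H\,W(1/H)$ for $H>0$, extended by $W^*(0):=0$ (its limit as $H\searrow0$); thus $W^*\ge0$ on $[0,\infty)$ with $W^*(0)=W^*(1)=0$ and $W^*>0$ otherwise. For $\varepsilon>0$, $$E_\varepsilon[H]=\int_0^\lambda\Big(\tfrac{\varepsilon^2}{2}(H')^2+W^*(H)\Big)dy,$$ $$U_\varepsilon[h]=\int_0^\lambda\Big(\tfrac{\varepsilon^2}{2}(h'')^2+W^*(h')+\tfrac{k\,h'}{2}(y-\lambda h)^2\Big)dy,$$ where $k>0$ is a constant. *)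

(* Defs.v *)
From HB Require Import structures.
From mathcomp Require Import all_boot all_order all_algebra.
From mathcomp Require Import all_classical all_reals all_analysis.
Set Implicit Arguments. Unset Strict Implicit. Unset Printing Implicit Defensive.
Import Order.TTheory GRing.Theory Num.Theory.
Import numFieldNormedType.Exports.
Local Open Scope classical_set_scope.
Local Open Scope ring_scope.

Section Defs.
Variable R : realType.
Local Notation mu := (@lebesgue_measure R).

Definition I0 (lam : R) : set R := `[0, lam].

Definition convex_on (D : set R) (f : R -> R) : Prop :=
  forall a b t, D a -> D b -> 0 <= t <= 1 ->
    f (t * a + (1 - t) * b) <= t * f a + (1 - t) * f b.
Definition concave_on (D : set R) (f : R -> R) : Prop :=
  convex_on D (fun x => - f x).

Definition stored_energy (W : R -> R) : Prop :=
  (forall F, 0 < F -> derivable W F 1) /\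
  (forall F, 0 < F -> {for F, continuous (derive1 W)}) /\
  (forall F, 0 < F -> 0 <= W F) /\
  W 1 = 0 /\ (forall F, 0 < F -> F != 1 -> 0 < W F) /\
  convex_on `]0, 1[ W /\
  (exists F0, 1 < F0 /\ convex_on `]0, F0] W /\ concave_on `[F0, +oo[ W) /\
  (exists L : R, W x @[x --> +oo] --> L).

(* inverse stored energy W*(H) = H W(1/H), W*(0) = 0 (values for H < 0
   are irrelevant: they are only evaluated on null sets) *)
Definition Wstar (W : R -> R) (H : R) : R :=
  if 0 < H then H * W H^-1 else 0.

Definition L2 (lam : R) (g : R -> R) : Prop :=
  measurable_fun (I0 lam) g /\
  (\int[mu]_(x in I0 lam) ((g x) ^+ 2)%:E < +oo)%E.

(* H in H^1(0,lam) with weak derivative dH: dH in L^2 and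
   H(y) = H(0) + int_0^y dH on [0,lam] (absolutely continuous representative) *)
Definition H1 (lam : R) (H dH : R -> R) : Prop :=
  L2 lam dH /\
  forall y, 0 <= y <= lam ->
    (H y)%:E = ((H 0)%:E + \int[mu]_(x in I0 y) (dH x)%:E)%E.

Definition H2 (lam : R) (h dh d2h : R -> R) : Prop :=
  H1 lam dh d2h /\
  forall y, 0 <= y <= lam ->
    (h y)%:E = ((h 0)%:E + \int[mu]_(x in I0 y) (dh x)%:E)%E.

Definition Eeps (W : R -> R) (eps lam : R) (H dH : R -> R) : \bar R :=
  (\int[mu]_(y in I0 lam)
     ((eps ^+ 2 / 2 * (dH y) ^+ 2 + Wstar W (H y))%:E))%E.

Definition Ueps (W : R -> R) (eps k lam : R) (h dh d2h : R -> R) : \bar R :=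
  (\int[mu]_(y in I0 lam)
     ((eps ^+ 2 / 2 * (d2h y) ^+ 2 + Wstar W (dh y)
       + k * dh y / 2 * (y - lam * h y) ^+ 2)%:E))%E.

Definition admissibleE (lam : R) (H dH : R -> R) : Prop :=
  H1 lam H dH /\
  {ae mu, forall y, I0 lam y -> 0 <= H y} /\
  (\int[mu]_(y in I0 lam) (H y)%:E = 1%:E)%E.

Definition admissibleU (lam : R) (h dh d2h : R -> R) : Prop :=
  H2 lam h dh d2h /\
  {ae mu, forall y, I0 lam y -> 0 <= dh y} /\
  h 0 = 0 /\ h lam = 1.

End Defs.

(* Main.v *)
Require Import Defs.
From HB Require Import structures.
From mathcomp Require Import all_boot all_order all_algebra.
From mathcomp Require Import all_classical all_reals all_analysis.
From mathcomp Require Import ring lra measurable_realfun.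
From mathcomp Require Import lebesgue_integral_differentiation.
Import Order.TTheory GRing.Theory Num.Theory.
Import numFieldNormedType.Exports.
Local Open Scope classical_set_scope.
Local Open Scope ring_scope.


Lemma three_chord (R : realType) (D : set R) (f : R -> R) x m y :
  convex_on D f -> D x -> D y -> x < m -> m < y ->
  (f m - f x) / (m - x) <= (f y - f m) / (y - m).
Proof.
move=> cf Dx Dy xm my.
have xy : x < y by exact: lt_trans xm my.
have yx0 : y - x != 0 by rewrite subr_eq0 gt_eqF.
set t := (y - m) / (y - x).
have ht : t * (y - x) = y - m by rewrite /t mulrVK // unitfE.
have t0 : 0 <= t by rewrite /t divr_ge0 // subr_ge0 ltW.
have t1 : t <= 1 by rewrite /t ler_pdivrMr ?subr_gt0 // mul1r lerD2l lerN2 ltW.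
have := cf x y t Dx Dy.
rewrite t0 t1 => /(_ isT).
have -> : t * x + (1 - t) * y = m.
  apply: (mulIf yx0).
  have -> : (t * x + (1 - t) * y) * (y - x) = (t * (y - x)) * (x - y) + y * (y - x) by ring.
  rewrite ht; ring.
move=> h.
have h1 : f m * (y - x) <= (y - m) * f x + (m - x) * f y.
  have e : (t * f x + (1 - t) * f y) * (y - x) = (y - m) * f x + (m - x) * f y.
    have -> : (t * f x + (1 - t) * f y) * (y - x) = (t * (y - x)) * (f x - f y) + f y * (y - x) by ring.
    rewrite ht; ring.
  by rewrite -e ler_pM2r ?subr_gt0.
rewrite ler_pdivrMr ?subr_gt0 // mulrAC ler_pdivlMr ?subr_gt0 //.
nra.
Qed.
Arguments three_chord {R D f x m y}.


Lemma tangent (R : realType) (W : R -> R) lam :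
  stored_energy W -> 0 < lam -> lam <= 1 ->
  exists sg, sg <= 0 /\ forall F, 0 < F -> W lam + sg * (F - lam) <= W F.
Proof.
move=> [_ [_ [W0 [W1 [_ [_ [[F0 [F01 [cW _]]] _]]]]]]] l0 l1.
have inD : forall x, 0 < x -> x <= F0 -> (`]0, F0]%classic : set R) x.
  by move=> x x0 xF; rewrite /= in_itv /= x0 xF.
have lD : (`]0, F0]%classic : set R) lam by apply: inD => //; apply: le_trans l1 (ltW F01).
pose S := [set (W lam - W x) / (lam - x) | x in `]0, lam[%classic].
have S0 : S !=set0.
  exists ((W lam - W (lam / 2)) / (lam - lam / 2)); exists (lam / 2) => //.
  by rewrite /= in_itv /=; apply/andP; split; lra.
have Sub : ubound S 0.
  move=> _ [x /= + <-]; rewrite in_itv /= => /andP[x0 xl].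
  have xD : (`]0, F0]%classic : set R) x by apply: inD => //; lra.
  have [l1'|l1'] := eqVneq lam 1.
    rewrite l1' W1 sub0r mulNr oppr_le0 divr_ge0 ?W0 //.
    by rewrite subr_ge0 ltW // -l1'.
  have lt1 : lam < 1 by rewrite lt_neqAle l1' l1.

  apply: (le_trans (three_chord cW xD (inD 1 ltr01 (ltW F01)) xl lt1)).
  by rewrite W1 sub0r mulNr oppr_le0 divr_ge0 ?W0 // subr_ge0 ltW.
have hS : has_ubound S by exists 0.
set sg := sup S.
have sg0 : sg <= 0 by apply: ge_sup.
have main : forall F, 0 < F -> F <= F0 -> W lam + sg * (F - lam) <= W F.
  move=> F F0' FF0.
  have [Fl|lF|->] := ltgtP F lam; last by rewrite subrr mulr0 addr0.
  - have : (W lam - W F) / (lam - F) <= sg.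
      apply: ub_le_sup => //; exists F => //; rewrite /= in_itv /= F0' Fl //.
    rewrite ler_pdivrMr ?subr_gt0 // => h; nra.
  - have : sg <= (W F - W lam) / (F - lam).
      apply: ge_sup => // _ [x /= + <-]; rewrite in_itv /= => /andP[x0 xl].
      exact: three_chord cW (inD x x0 (ltW (lt_le_trans (lt_trans xl lF) FF0))) (inD F F0' FF0) xl lF.
    rewrite ler_pdivlMr ?subr_gt0 // => h; nra.
exists sg; split => // F F0'.
have [FF0|F0F] := leP F F0; first exact: main.
have := main 1 ltr01 (ltW F01); rewrite W1 => h.
have := W0 F F0'; nra.
Qed.
Arguments tangent {R W lam}.


Lemma wstar_lb (R : realType) (W : R -> R) lam :
  stored_energy W -> 0 < lam -> lam <= 1 ->
  exists a s, 0 <= a /\ s <= 0 /\ a + s * lam = W lam /\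
    forall x, a * x + s <= Wstar W x.
Proof.
move=> sW l0 l1; have [sg [sg0 tg]] := tangent sW l0 l1.
have Wl0 : 0 <= W lam by case: sW => _ [_ [W0 _]]; exact: W0.
exists (W lam - sg * lam), sg; split; first nra.
split => //; split; first ring.
move=> x; rewrite /Wstar; case: ifPn => x0.
  have h := tg x^-1 (ltac:(by rewrite invr_gt0)).
  have e : x * (W lam + sg * (x^-1 - lam)) = (W lam - sg * lam) * x + sg.
    by field; rewrite gt_eqF.
  rewrite -e; apply: ler_wpM2l => //; exact: ltW.
rewrite -leNgt in x0.
have ha : 0 <= W lam - sg * lam by nra.
have := mulr_ge0_le0 ha x0; lra.
Qed.

Lemma wstar_meas (R : realType) (W : R -> R) :
  stored_energy W -> measurable_fun setT (Wstar W).
Proof.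
move=> [dW _].
have e : setT `&` (fun x : R => 0 < x) @^-1` [set true] = `]0, +oo[%classic.
  by apply/seteqP; split => x /=; rewrite in_itv /= andbT //; case.
apply: measurable_fun_if => //.
- apply: (measurable_fun_bool true); rewrite e; exact: measurable_itv.
- rewrite e; apply: open_continuous_measurable_fun; first exact: interval_open.
  move=> x; rewrite inE /= in_itv /= andbT => x0.
  have ci := @inv_continuous R x (lt0r_neq0 x0).
  have cw : derivable W x^-1 1 by apply: dW; rewrite invr_gt0.
  move/derivable1_diffP/differentiable_continuous: cw => cw.
  have cc : {for x, continuous (W \o GRing.inv)} by apply: continuous_comp.
  by apply: cvgM.
Qed.
Arguments wstar_lb {R W lam}. Arguments wstar_meas {R W}.


Notation mu := (@lebesgue_measure _).

Lemma muI0 (R : realType) (lam : R) : 0 <= lam -> mu (I0 lam) = lam%:E.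
Proof.
move=> l0; rewrite /I0 lebesgue_measure_itv /= lte_fin.
case: ifPn => [_|]; first by rewrite ?subr0 ?sube0 ?EFinB ?subr0.
by rewrite -leNgt => la; congr EFin; apply/eqP; rewrite eq_le la l0.
Qed.

Arguments muI0 {R lam}.

Lemma mI0 (R : realType) (lam : R) : measurable (I0 lam).
Proof. exact: measurable_itv. Qed.
Arguments mI0 {R}.

Lemma norm_le_sq (R : realType) (x : R) : `|x| <= 1 + x ^+ 2.
Proof.
have [x0|x0] := leP 0 x.
  rewrite ger0_norm //; nra.
rewrite ltr0_norm //; nra.
Qed.

Lemma L2_int (R : realType) (lam : R) g :
  0 <= lam -> L2 lam g -> mu.-integrable (I0 lam) (EFin \o g).
Proof.
move=> l0 [mg fin]; apply/integrableP; split; first exact/measurable_EFinP.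
apply: (@le_lt_trans _ _ (\int[mu]_(x in I0 lam) (1%:E + (g x ^+ 2)%:E))%E).
  apply: ge0_le_integral => //; first exact: mI0.
  - apply: measurableT_comp => //; exact/measurable_EFinP.
  - apply: emeasurable_funD => //; apply/measurable_EFinP => //.
    exact: measurable_funX.
  - by move=> x _; rewrite /= -EFinD lee_fin norm_le_sq.
rewrite ge0_integralD //; first last.
- apply/measurable_EFinP; exact: measurable_funX.
- by move=> x _; rewrite lee_fin sqr_ge0.
- exact: mI0.
apply: lte_add_pinfty => //.
rewrite integral_cst ?mI0 //.
rewrite mul1e; have := muI0 l0; rewrite /= => ->; exact: ltry.
exact: mI0.
Qed.

Arguments L2_int {R lam g}.

Lemma H1_int_gen (R : realType) (lam : R) H dH :
  0 <= lam -> mu.-integrable (I0 lam) (EFin \o dH) ->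
  (forall y, 0 <= y <= lam ->
    (H y)%:E = ((H 0)%:E + \int[mu]_(x in I0 y) (dH x)%:E)%E) ->
  mu.-integrable (I0 lam) (EFin \o H).
Proof.
move=> l0 idH hH.
pose F y := parameterized_integral mu 0 y dH.
have eqH : {in I0 lam, (fun y => (H 0)%:E + (F y)%:E) =1 EFin \o H}.
  move=> y; rewrite inE /I0 /= in_itv /= => yl.
  have := hH y yl; rewrite /F /parameterized_integral /Rintegral -/(I0 y).
  case: (\int[mu]_(x in I0 y) (dH x)%:E)%E => [r| |] //=.
apply: (@eq_integrable _ _ _ mu (I0 lam) (mI0 lam) (fun y => (H 0)%:E + (F y)%:E)); first exact: eqH.
apply: integrableD; first exact: mI0.
  apply: continuous_compact_integrable; first exact: segment_compact.
  by apply: continuous_subspaceT => x; exact: cvg_cst.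
apply: continuous_compact_integrable; first exact: segment_compact.
exact: parameterized_integral_continuous.
Qed.

Arguments H1_int_gen {R lam H dH}.

Lemma H1_int (R : realType) (lam : R) H dH :
  0 <= lam -> H1 lam H dH -> mu.-integrable (I0 lam) (EFin \o H).
Proof. by move=> l0 [hL2 hH]; exact: H1_int_gen l0 (L2_int l0 hL2) hH. Qed.
Arguments H1_int {R lam H dH}.


Lemma key (R : realType) (lam : R) (g f : R -> R) :
  mu.-integrable (I0 lam) (EFin \o g) -> measurable_fun (I0 lam) f ->
  {ae mu, forall y, I0 lam y -> g y <= f y} ->
  {ae mu, forall y, I0 lam y -> 0 <= f y} ->
  (\int[mu]_(y in I0 lam) (g y)%:E <= \int[mu]_(y in I0 lam) (f y)%:E)%E.
Proof.
move=> ig mf gf f0.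
have mg : measurable_fun (I0 lam) (EFin \o g) by case/integrableP: ig.
have mf' : measurable_fun (I0 lam) (EFin \o f) by exact/measurable_EFinP.
rewrite integralE.
apply: (@le_trans _ _ (\int[mu]_(y in I0 lam) (EFin \o g)^\+ y)%E).
  by apply: geeDl; rewrite oppe_le0; apply: integral_ge0 => x _; exact: funeneg_ge0.
rewrite (@ae_eq_integral _ _ _ mu (I0 lam) ((EFin \o f)^\+)%E (EFin \o f)) //.
- apply: ae_ge0_le_integral => //.
  + exact: mI0.
  + exact: measurable_funepos.
  + exact: measurable_funepos.
  + move: gf; apply: filterS; first exact: (ae_filter_ringOfSetsType mu).
    move=> x h Dx; rewrite !funeposE /=.
    by rewrite ge_max !le_max !lee_fin h // lexx !orbT.
- exact: mI0.
- exact: measurable_funepos.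
- move: f0; apply: filterS; first exact: (ae_filter_ringOfSetsType mu).
  move=> x h Dx; rewrite funeposE /= max_l // lee_fin; exact: h.
Qed.
Arguments key {R lam g f}.


Lemma Wstar_ge0 (R : realType) (W : R -> R) x : stored_energy W -> 0 <= Wstar W x.
Proof.
move=> [_ [_ [W0 _]]]; rewrite /Wstar; case: ifPn => // x0.
apply: mulr_ge0; first exact: ltW.
by apply: W0; rewrite invr_gt0.
Qed.

Lemma cst_int (R : realType) (lam c : R) :
  mu.-integrable (I0 lam) (fun _ => c%:E).
Proof.
have := @continuous_compact_integrable R (fun _ => c) (I0 lam) (@segment_compact R 0 lam).
apply; apply: continuous_subspaceT => x; exact: cvg_cst.
Qed.

Arguments cst_int {R}.

Lemma lower (R : realType) (W : R -> R) (lam : R) (H f : R -> R) :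
  stored_energy W -> 0 < lam -> lam <= 1 ->
  mu.-integrable (I0 lam) (EFin \o H) ->
  (\int[mu]_(y in I0 lam) (H y)%:E = 1%:E)%E ->
  measurable_fun (I0 lam) f ->
  {ae mu, forall y, I0 lam y -> Wstar W (H y) <= f y} ->
  {ae mu, forall y, I0 lam y -> 0 <= f y} ->
  ((W lam)%:E <= \int[mu]_(y in I0 lam) (f y)%:E)%E.
Proof.
move=> sW l0 l1 iH IH mf hf f0.
have [a [s [a0 [s0 [as1 lb]]]]] := wstar_lb sW l0 l1.
have ig : mu.-integrable (I0 lam) (fun y => (a%:E * (H y)%:E) + s%:E)%E.
  have iZ : mu.-integrable (I0 lam) (fun y => a%:E * (EFin \o H) y)%E.
    by apply: (integrableZl _ a iH); exact: mI0.
  have iC := cst_int lam s.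
  by apply: (integrableD _ iZ iC); exact: mI0.
have eg : (\int[mu]_(y in I0 lam) (a * H y + s)%:E = (W lam)%:E)%E.
  rewrite (@eq_integral _ _ _ mu (I0 lam) (fun y => (a%:E * (H y)%:E) + s%:E)%E); last first.
    by move=> y _; rewrite EFinD EFinM.
  have iZ : mu.-integrable (I0 lam) (fun y => a%:E * (EFin \o H) y)%E.
    by apply: (integrableZl _ a iH); exact: mI0.
  have iC := cst_int lam s.
  rewrite (integralD _ iZ iC); last exact: mI0.
  rewrite (integralZl _ iH); last exact: mI0.
  rewrite IH integral_cst; last exact: mI0.
  have := muI0 (ltW l0); rewrite /= => ->.
  by rewrite -!EFinM -EFinD mulr1 as1.
rewrite -eg; apply: key.
- apply: (eq_integrable _ _ _ _ ig); first exact: mI0.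
  by move=> y _ /=; rewrite EFinD EFinM.
- exact: mf.
- move: hf; apply: filterS; first exact: (ae_filter_ringOfSetsType mu).
  move=> y h Dy; apply: le_trans (h Dy); exact: lb.
- exact: f0.
Qed.
Arguments lower {R W lam H f}. Arguments Wstar_ge0 {R W} x.


Theorem proposition1 (R : realType) (W : R -> R) (eps k lam : R) :
  stored_energy W -> 0 < eps -> 0 < k -> 0 < lam -> lam <= 1 ->
  (* the constant inverse stretch H = 1/lam is admissible and minimizes E *)
  admissibleE lam (fun _ => lam^-1) (fun _ => 0) /\
  (forall H dH, admissibleE lam H dH ->
     (Eeps W eps lam (fun _ => lam^-1)%R (fun _ => 0%R) <= Eeps W eps lam H dH)%E) /\
  (* the homogeneous deformation h(y) = y/lam is admissible and minimizes U *)
  admissibleU lam (fun y => y / lam) (fun _ => lam^-1) (fun _ => 0) /\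
  (forall h dh d2h, admissibleU lam h dh d2h ->
     (Ueps W eps k lam (fun y => y / lam)%R (fun _ => lam^-1)%R (fun _ => 0%R)
        <= Ueps W eps k lam h dh d2h)%E) /\
  (* minimum values *)
  Eeps W eps lam (fun _ => lam^-1) (fun _ => 0) = (lam * Wstar W lam^-1)%:E /\
  Ueps W eps k lam (fun y => y / lam) (fun _ => lam^-1) (fun _ => 0)
    = (lam * Wstar W lam^-1)%:E /\
  lam * Wstar W lam^-1 = W lam.
Proof.
move=> sW e0 k0 l0 l1.
have l0' := ltW l0.
have lnz : lam != 0 := lt0r_neq0 l0.
have muI := muI0 l0'.
have Wl : lam * Wstar W lam^-1 = W lam.
  by rewrite /Wstar invr_gt0 l0 invrK mulrA mulfV // mul1r.
have H1c : H1 lam (fun _ => lam^-1) (fun _ => 0).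
  split.
  - split; first exact: measurable_cst.
    rewrite integral_cst; last exact: mI0.
    move: muI; rewrite /= => ->; by rewrite -EFinM ltry.
  - move=> y _; by rewrite integral0 adde0.
have Econst : Eeps W eps lam (fun _ => lam^-1) (fun _ => 0) = (lam * Wstar W lam^-1)%:E.
  rewrite /Eeps (@eq_integral _ _ _ mu (I0 lam) (fun _ => (Wstar W lam^-1)%:E)); last first.
    by move=> y _; rewrite expr0n /= mulr0 add0r.
  rewrite integral_cst; last exact: mI0.
  move: muI; rewrite /= => ->; by rewrite -EFinM mulrC.
have Uconst : Ueps W eps k lam (fun y => y / lam) (fun _ => lam^-1) (fun _ => 0)
    = (lam * Wstar W lam^-1)%:E.
  rewrite /Ueps (@eq_integral _ _ _ mu (I0 lam) (fun _ => (Wstar W lam^-1)%:E)); last first.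
    move=> y _ /=; rewrite expr0n /= mulr0 add0r [lam * _]mulrC divfK // subrr.
    by rewrite expr0n /= mulr0 addr0.
  rewrite integral_cst; last exact: mI0.
  move: muI; rewrite /= => ->; by rewrite -EFinM mulrC.
split.
  split; first exact: H1c.
  split.
    by apply: aeW => y _; rewrite invr_ge0.
  rewrite integral_cst; last exact: mI0.
  move: muI; rewrite /= => ->; by rewrite -EFinM mulVf.
split.
  move=> H dH [h1 [hae hint]]; rewrite Econst Wl.
  have iH := H1_int l0' h1.
  have mH : measurable_fun (I0 lam) H.
    by case/integrableP: iH => /measurable_EFinP.
  have mdH : measurable_fun (I0 lam) dH by case: h1 => [[]].
  apply: (lower sW l0 l1 iH hint).
  - apply: measurable_funD.
      apply: measurable_funM; first exact: measurable_cst.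
      exact: measurable_funX.
    apply: measurableT_comp mH; exact: wstar_meas sW.
  - apply: aeW => y _; rewrite lerDr; apply: mulr_ge0; last exact: sqr_ge0.
    by apply: divr_ge0 => //; exact: sqr_ge0.
  - apply: aeW => y _; apply: addr_ge0; last exact: Wstar_ge0.
    apply: mulr_ge0; last exact: sqr_ge0.
    by apply: divr_ge0 => //; exact: sqr_ge0.
split.
  split; first split.
  - exact: H1c.
  - move=> y /andP[y0 _]; rewrite integral_cst; last exact: mI0.
    have := muI0 y0; rewrite /= => ->.
    by rewrite mul0r add0e -EFinM mulrC.
  split; first by apply: aeW => y _; rewrite invr_ge0.
  by split; [rewrite mul0r | rewrite divff].
split.
  move=> h dh d2h [[h1 hh] [hae [h00 hl1]]]; rewrite Uconst Wl.
  have idh := H1_int l0' h1.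
  have ih := H1_int_gen l0' idh hh.
  have Idh : (\int[mu]_(y in I0 lam) (dh y)%:E = 1%:E)%E.
    have := hh lam; rewrite lexx l0' h00 hl1 add0e => /(_ isT) <- //.
  have mh : measurable_fun (I0 lam) h.
    by case/integrableP: ih => /measurable_EFinP.
  have mdh : measurable_fun (I0 lam) dh.
    by case/integrableP: idh => /measurable_EFinP.
  have md2h : measurable_fun (I0 lam) d2h by case: h1 => [[]].
  apply: (lower sW l0 l1 idh Idh).
  - apply: measurable_funD.
      apply: measurable_funD.
        apply: measurable_funM; first exact: measurable_cst.
        exact: measurable_funX.
      apply: measurableT_comp mdh; exact: wstar_meas sW.
    apply: measurable_funM.
      apply: measurable_funM; last exact: measurable_cst.
      apply: measurable_funM; first exact: measurable_cst.
      exact: mdh.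
    apply: measurable_funX; apply: measurable_funB; first exact: measurable_id.
    apply: measurable_funM; first exact: measurable_cst.
    exact: mh.
  - move: hae; apply: filterS; first exact: (ae_filter_ringOfSetsType mu).
    move=> y hy Dy; have d0 := hy Dy.
    have t1 : 0 <= eps ^+ 2 / 2 * d2h y ^+ 2.
      by apply: mulr_ge0; [apply: divr_ge0 => //; exact: sqr_ge0 | exact: sqr_ge0].
    have t3 : 0 <= k * dh y / 2 * (y - lam * h y) ^+ 2.
      apply: mulr_ge0; last exact: sqr_ge0.
      by apply: divr_ge0 => //; apply: mulr_ge0 => //; exact: ltW.
    lra.
  - move: hae; apply: filterS; first exact: (ae_filter_ringOfSetsType mu).
    move=> y hy Dy; have d0 := hy Dy.
    have t1 : 0 <= eps ^+ 2 / 2 * d2h y ^+ 2.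
      by apply: mulr_ge0; [apply: divr_ge0 => //; exact: sqr_ge0 | exact: sqr_ge0].
    have t3 : 0 <= k * dh y / 2 * (y - lam * h y) ^+ 2.
      apply: mulr_ge0; last exact: sqr_ge0.
      by apply: divr_ge0 => //; apply: mulr_ge0 => //; exact: ltW.
    have t2 := Wstar_ge0 (dh y) sW.
    lra.
by split; [exact: Econst | split; [exact: Uconst | exact: Wl]].
Qed.
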